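(* A Bratteli diagram $B$ admits an ordering $\omega\in\mathcal O_B$ with $\mathrm{Int}(X_{\max}(\omega))\neq\emptyset$ if and only if there exist $x=(x_i)\in X_B$ and $n\ge1$ such that the cylinder set $U(x_1,\dots,x_n)=\{y\in X_B: y_i=x_i,\ i=1,\dots,n\}$ meets each tail-equivalence class in at most one point. The same statement holds with $X_{\min}(\omega)$ in place of $X_{\max}(\omega)$.
   Context: A Bratteli diagram $B=(V^*,E)$ has levels $V_n$ ($V_0=\{v_0\}$, all finite) and finite edge sets $E_n$ from $V_{n-1}$ to $V_n$, with source and range maps $s,r$. $X_B$ is the space of infinite paths $(x_1,x_2,\dots)$, $x_n\in E_n$, $s(x_1)=v_0$, $r(x_n)=s(x_{n+1})$, with topology generated by cylinder sets. Two paths are tail equivalent if they agree from some index on. An ordering $\omega$ is a choice of linear order on $r^{-1}(v)$ for each $v\neq v_0$; $\mathcal O_B$ is the set of orderings. $X_{\max}(\omega)$ ($X_{\min}(\omega)$) is the set of infinite paths each of whose edges is maximal (minimal) in $r^{-1}$ of its range. $\mathrm{Int}$ denotes topological interior in $X_B$. *)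

(* Defs.v *)
From mathcomp Require Import all_boot.
Set Implicit Arguments. Unset Strict Implicit. Unset Printing Implicit Defensive.

(* Levels V_n (n : nat) are finite types with #|V_0| = 1.
   Index shift: [E B n] is the paper's edge set E_{n+1}, going from level n
   to level n+1, with source [src n : E n -> V n] and range
   [rng n : E n -> V n.+1]. *)
Record bratteli := Bratteli {
  V : nat -> finType;
  E : nat -> finType;
  src : forall n, E n -> V n;
  rng : forall n, E n -> V n.+1;
  V0_single : #|V 0| = 1
}.

(* Infinite paths: x n is the paper's x_{n+1}; r(x_{n+1}) = s(x_{n+2}).
   s(x_1) = v_0 is automatic since V_0 is a singleton. *)
Record bpath (B : bratteli) := Path {
  pedge :> forall n, E B n;
  pedgeP : forall n, rng (pedge n) = src (pedge n.+1)
}.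

Definition same_path B (x y : bpath B) : Prop := forall k, x k = y k.

Definition cylinder B (x : bpath B) (n : nat) : bpath B -> Prop :=
  fun y => forall i, i < n -> y i = x i.

(* Topology generated by cylinder sets (they form a base). *)
Definition is_open B (O : bpath B -> Prop) : Prop :=
  forall x, O x -> exists n, forall y, cylinder x n y -> O y.

Definition interior B (A : bpath B -> Prop) : bpath B -> Prop :=
  fun x => exists O, is_open O /\ O x /\ (forall y, O y -> A y).

Definition tail_equiv B (x y : bpath B) : Prop :=
  exists m, forall k, m <= k -> x k = y k.

(* An ordering: for every vertex v (of level >= 1) a linear order on r^{-1}(v).
   It is given by a relation on each E n; only its restriction to the fibres
   r^{-1}(v) matters. *)
Definition is_ordering B (w : forall n, rel (E B n)) : Prop :=
  forall n (v : V B n.+1),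
    (forall e, rng e = v -> w n e e) /\
    (forall e f, rng e = v -> rng f = v -> w n e f -> w n f e -> e = f) /\
    (forall e f g, rng e = v -> rng f = v -> rng g = v ->
        w n e f -> w n f g -> w n e g) /\
    (forall e f, rng e = v -> rng f = v -> w n e f || w n f e).

Definition is_max_edge B (w : forall n, rel (E B n)) n (e : E B n) : Prop :=
  forall f, rng f = rng e -> w n f e.

Definition is_min_edge B (w : forall n, rel (E B n)) n (e : E B n) : Prop :=
  forall f, rng f = rng e -> w n e f.

Definition Xmax B (w : forall n, rel (E B n)) : bpath B -> Prop :=
  fun x => forall n, is_max_edge w (x n).

Definition Xmin B (w : forall n, rel (E B n)) : bpath B -> Prop :=
  fun x => forall n, is_min_edge w (x n).

Definition cyl_tail_injective B (x : bpath B) (n : nat) : Prop :=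
  forall y z, cylinder x n y -> cylinder x n z -> tail_equiv y z -> same_path y z.

(* Main.v *)
From Stdlib Require Import ClassicalEpsilon.
Require Import Defs.
From mathcomp Require Import all_boot.

Definition gb (P : Prop) : bool :=
  if excluded_middle_informative P then true else false.

Lemma gbP (P : Prop) : gb P = true <-> P.
Proof. by rewrite /gb; case: excluded_middle_informative. Qed.

Section S.
Variable B : bratteli.

Lemma dir1 (P : forall n, E B n -> Prop)
  (Puniq : forall n (e f : E B n), rng e = rng f -> P n e -> P n f -> e = f)
  (x : bpath B) :
  (exists O, is_open O /\ O x /\ (forall y, O y -> forall n, P n (y n))) ->
  exists (x : bpath B) (n : nat), 1 <= n /\ cyl_tail_injective x n.
Proof.
move=> [O [oO [Ox OX]]].
have [n Hn] := oO x Ox.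
exists x, n.+1; split => //.
move=> y z Hy Hz [m Hm].
have Yy : forall k, P k (y k).
  by apply: OX; apply: Hn => i Hi; apply: Hy; apply: ltnW.
have Yz : forall k, P k (z k).
  by apply: OX; apply: Hn => i Hi; apply: Hz; apply: ltnW.
suff H : forall d k, m <= k + d -> y k = z k.
  by move=> k; apply: (H m); rewrite leq_addl.
elim=> [|d IH] k Hk.
  by apply: Hm; rewrite addn0 in Hk.
have H1 : y k.+1 = z k.+1 by apply: IH; rewrite addSn -addnS.
apply: Puniq (Yy k) (Yz k).
by rewrite (pedgeP y) (pedgeP z) H1.
Qed.

Definition splice (y z : bpath B) (k : nat)
  (H : rng (y k) = rng (z k)) : bpath B.
refine (@Path B (fun i => if i <= k then y i else z i) _).
move=> i.
case: (ltngtP i k) => Hik.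
- by rewrite (pedgeP y).
- exact: pedgeP.
- by subst i; rewrite H (pedgeP z).
Defined.

Variable x : bpath B.
Variable n : nat.
Hypothesis Hinj : cyl_tail_injective x n.

Definition good k (e : E B k) : bool := gb (exists y, cylinder x n y /\ y k = e).
Arguments good {k} e.

Lemma good_uniq k (e f : E B k) : rng e = rng f -> good e -> good f -> e = f.
Proof.
move=> + /gbP [y [Hy Ey]] /gbP [z [Hz Ez]].
rewrite -Ey -Ez => Hr.
have S := Hinj (splice y z k Hr) z _ Hz.
have := S _ _ k.
rewrite /= leqnn; apply.
- by move=> i Hi /=; case: ifP => _; [apply: Hy | apply: Hz].
- by exists k.+1 => j Hj /=; rewrite leqNgt Hj.
Qed.

Definition wo k (e f : E B k) : bool :=
  if good e == good f then enum_rank e <= enum_rank f else good f.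

Lemma wo_ord : is_ordering wo.
Proof.
move=> k v; split; [|split; [|split]].
- by move=> e _; rewrite /wo eqxx leqnn.
- move=> e f _ _; rewrite /wo eq_sym.
  case: eqP => Hg.
    move=> H1 H2; apply: enum_rank_inj; apply: val_inj; apply/eqP.
    by rewrite eqn_leq H1 H2.
  by move=> H1 H2; case: Hg; rewrite H1 H2.
- move=> e f g _ _ _; rewrite /wo.
  by case: (good e); case: (good f); case: (good g) => //= ; apply: leq_trans.
- move=> e f _ _; rewrite /wo.
  by case: (good f); case: (good e) => /=; rewrite ?leq_total.
Qed.

Lemma wo_max k (e : E B k) : good e -> is_max_edge wo e.
Proof.
move=> Ge f Hf; rewrite /wo Ge.
case Gf: (good f).
  by rewrite (@good_uniq k f e Hf Gf Ge) leqnn.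
by [].
Qed.

Definition wor k (e f : E B k) : bool := wo k f e.

Lemma wor_ord : is_ordering wor.
Proof.
move=> k v; have [H1 [H2 [H3 H4]]] := wo_ord k v; split; [|split; [|split]].
- exact: H1.
- by move=> e f He Hf A C; apply: H2.
- by move=> e f g He Hf Hg A C; apply: (H3 g f e).
- by move=> e f He Hf; rewrite /wor orbC; apply: H4.
Qed.

Lemma cyl_open : is_open (cylinder x n).
Proof. by move=> y Hy; exists n => z Hz i Hi; rewrite Hz // Hy. Qed.

Lemma cyl_good y : cylinder x n y -> forall k, good (y k).
Proof. by move=> Hy k; apply/gbP; exists y. Qed.

End S.

Theorem mainTheorem4 (B : bratteli) :
  ((exists w, is_ordering w /\ exists x : bpath B, interior (Xmax w) x) <->
   (exists (x : bpath B) (n : nat), 1 <= n /\ cyl_tail_injective x n)) /\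
  ((exists w, is_ordering w /\ exists x : bpath B, interior (Xmin w) x) <->
   (exists (x : bpath B) (n : nat), 1 <= n /\ cyl_tail_injective x n)).
Proof.
split; split.
- move=> [w [Hw [x Hx]]].
  apply: (@dir1 B (fun k e => is_max_edge w e) _ x Hx).
  move=> k e f Hr He Hf; have [_ [A _]] := Hw k (rng e).
  apply: (A e f erefl (esym Hr)).
    by [apply: Hf | apply: He]; rewrite ?Hr.
  by [apply: He | apply: Hf]; rewrite -?Hr.
- move=> [x [n [_ Hi]]]; exists (@wo B x n); split; first exact: (@wo_ord B x n).
  exists x, (cylinder x n); split; first exact: cyl_open.
  split; first by [].
  by move=> y Hy k; exact: (@wo_max B x n Hi k (y k) (@cyl_good B x n y Hy k)).
- move=> [w [Hw [x Hx]]].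
  apply: (@dir1 B (fun k e => is_min_edge w e) _ x Hx).
  move=> k e f Hr He Hf; have [_ [A _]] := Hw k (rng e).
  apply: (A e f erefl (esym Hr)).
    by [apply: Hf | apply: He]; rewrite ?Hr.
  by [apply: He | apply: Hf]; rewrite -?Hr.
- move=> [x [n [_ Hi]]]; exists (@wor B x n); split; first exact: (@wor_ord B x n).
  exists x, (cylinder x n); split; first exact: cyl_open.
  split; first by [].
  by move=> y Hy k f Hf; exact: (@wo_max B x n Hi k (y k) (@cyl_good B x n y Hy k) f Hf).
Qed.
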